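(* Let $\Omega=G/K$ be an irreducible bounded symmetric domain and $\mathcal A\in\mathrm{Gr}(p,T_o\Omega)$ such that $\Sigma(\mathcal A)=cH_0$ for some constant $c$. Then the function $\mathcal B\mapsto\|\Sigma(\mathcal B)\|^2_{\mathfrak g,\mathfrak l}$ on $\mathrm{Gr}(p,T_o\Omega)$ achieves its absolute minimum at $\mathcal A$.
   Context: Data: $\mathfrak g=\mathfrak l\oplus\mathfrak p$ Cartan decomposition of $\mathrm{Lie}(G)$, $H_0$ central in $\mathfrak l$ with $\mathrm{ad}(H_0)^2$ the Cartan involution and $\mathrm{ad}(H_0)|_{\mathfrak p}$ the complex structure at $o=eK$, $\mathfrak p^+\cong T^{1,0}_o\Omega$ the $\sqrt{-1}$-eigenspace of $\mathrm{ad}H_0$ in $\mathfrak p^{\mathbb C}$, with Hermitian form $(\alpha,\overline\beta)_{\mathcal K}$ ($\mathcal K$ the Killing form). $\mathrm{Gr}(p,T_o\Omega)$ is the Grassmannian of complex $p$-planes in $\mathfrak p^+$. For $\mathcal B$ with unitary basis $(e_i)$, $\Sigma(\mathcal B)=\sqrt{-1}\sum_i[e_i,\overline{e_i}]$. $\|\cdot\|_{\mathfrak g,\mathfrak l}$ is the norm on $\mathfrak l^{\mathbb C}$ from the Hermitian form $h_{\mathfrak g,\mathfrak l}(\lambda,\mu)=(\lambda,\overline\mu)_{\mathcal K}$. *)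

(* Defs.v *)
(* real Lie algebras given by real structure constants on R^n,
   complexification inside C^n with C = R[i] (mathcomp-real-closed). *)
From HB Require Import structures.
From mathcomp Require Import all_boot all_order all_algebra.
From mathcomp Require Import complex.
Set Implicit Arguments. Unset Strict Implicit. Unset Printing Implicit Defensive.
Import Order.TTheory GRing.Theory Num.Theory.
Local Open Scope ring_scope.

Section LieData.
Variables (R : rcfType) (n : nat).
(* structure constants: [e_i, e_j] = cst i j, a real vector *)
Variable cst : 'I_n -> 'I_n -> 'rV[R]_n.

Definition toC (r : R) : R[i] := (r%:C)%C.
Definition mapC m k (M : 'M[R]_(m, k)) : 'M[R[i]]_(m, k) := map_mx toC M.
Definition conjv m k (M : 'M[R[i]]_(m, k)) : 'M[R[i]]_(m, k) :=
  map_mx (fun z => (z^*)%C) M.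

Definition brR (x y : 'rV[R]_n) : 'rV[R]_n :=
  \sum_(i < n) \sum_(j < n) (x 0 i * y 0 j) *: cst i j.
Definition brC (x y : 'rV[R[i]]_n) : 'rV[R[i]]_n :=
  \sum_(i < n) \sum_(j < n) (x 0 i * y 0 j) *: mapC (cst i j).

Definition is_lie_algebra : Prop :=
  (forall x y : 'rV[R]_n, brR x y = - brR y x) /\
  (forall x y z : 'rV[R]_n,
      brR x (brR y z) + brR y (brR z x) + brR z (brR x y) = 0).

(* matrix of ad x (row-vector convention: v *m adR x = [x, v]) *)
Definition adR (x : 'rV[R]_n) : 'M[R]_n :=
  \matrix_(k < n, j < n) brR x (delta_mx 0 k) 0 j.
Definition adC (x : 'rV[R[i]]_n) : 'M[R[i]]_n :=
  \matrix_(k < n, j < n) brC x (delta_mx 0 k) 0 j.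

Definition kilR (x y : 'rV[R]_n) : R := \tr (adR x *m adR y).
Definition kilC (x y : 'rV[R[i]]_n) : R[i] := \tr (adC x *m adC y).

(* ideals (subspaces = row spaces of square matrices) *)
Definition is_ideal (I : 'M[R]_n) : Prop :=
  forall x y : 'rV[R]_n, (y <= I)%MS -> (brR x y <= I)%MS.

Definition is_simple : Prop :=
  (exists x y : 'rV[R]_n, brR x y != 0) /\
  (forall I : 'M[R]_n, is_ideal I -> \rank I = 0%N \/ \rank I = n).

Definition is_cartan_decomposition (L P : 'M[R]_n) : Prop :=
  (L + P == (1%:M : 'M[R]_n))%MS /\ (L :&: P == (0 : 'M[R]_n))%MS /\
  (forall x y, (x <= L)%MS -> (y <= L)%MS -> (brR x y <= L)%MS) /\
  (forall x y, (x <= L)%MS -> (y <= P)%MS -> (brR x y <= P)%MS) /\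
  (forall x y, (x <= P)%MS -> (y <= P)%MS -> (brR x y <= L)%MS) /\
  (forall x, (x <= L)%MS -> x != 0 -> kilR x x < 0) /\
  (forall x, (x <= P)%MS -> x != 0 -> 0 < kilR x x).

Definition is_H0 (L P : 'M[R]_n) (H0 : 'rV[R]_n) : Prop :=
  (H0 <= L)%MS /\
  (forall x, (x <= L)%MS -> brR H0 x = 0) /\
  (forall x, (x <= P)%MS -> brR H0 (brR H0 x) = - x).

Definition in_pplus (P : 'M[R]_n) (H0 : 'rV[R]_n) (v : 'rV[R[i]]_n) : Prop :=
  (v <= mapC P)%MS /\ brC (mapC H0) v = ('i)%C *: v.

Definition hermK (a b : 'rV[R[i]]_n) : R[i] := kilC a (conjv b).

(* the rows of E form a unitary basis of a complex p-plane in p^+,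
   i.e. span E is a point of Gr(p, T_o Omega) *)
Definition unitary_frame (P : 'M[R]_n) (H0 : 'rV[R]_n) (p : nat)
    (E : 'M[R[i]]_(p, n)) : Prop :=
  (forall i, in_pplus P H0 (row i E)) /\
  (forall i j, hermK (row i E) (row j E) = (i == j)%:R).

Definition Sigma (p : nat) (E : 'M[R[i]]_(p, n)) : 'rV[R[i]]_n :=
  ('i)%C *: \sum_(i < p) brC (row i E) (conjv (row i E)).

(* squared norm on l^C induced by the Killing form; sign chosen so that it
   is positive definite on l^C *)
Definition normsq_gl (lam : 'rV[R[i]]_n) : R[i] := - kilC lam (conjv lam).

End LieData.

(* Main.v *)
Require Import Defs.
From HB Require Import structures.
From mathcomp Require Import all_boot all_order all_algebra.
From mathcomp Require Import complex.
From mathcomp Require Import ring lra.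
Import Order.TTheory GRing.Theory Num.Theory.
Local Open Scope ring_scope.
Set Implicit Arguments. Unset Strict Implicit. Unset Printing Implicit Defensive.

Definition reM (R : rcfType) m k (M : 'M[R[i]]_(m,k)) : 'M[R]_(m,k) :=
  map_mx (@complex.Re R) M.
Definition imM (R : rcfType) m k (M : 'M[R[i]]_(m,k)) : 'M[R]_(m,k) :=
  map_mx (@complex.Im R) M.

Lemma cReD (R : rcfType) (x y : R[i]) : complex.Re (x + y) = complex.Re x + complex.Re y.
Proof. by case: x; case: y. Qed.
Lemma cImD (R : rcfType) (x y : R[i]) : complex.Im (x + y) = complex.Im x + complex.Im y.
Proof. by case: x; case: y. Qed.
Lemma cReM (R : rcfType) (x y : R[i]) :
  complex.Re (x * y) = complex.Re x * complex.Re y - complex.Im x * complex.Im y.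
Proof. by case: x; case: y. Qed.
Lemma cImM (R : rcfType) (x y : R[i]) :
  complex.Im (x * y) = complex.Re x * complex.Im y + complex.Im x * complex.Re y.
Proof. by case: x => a b; case: y => c d /=; rewrite addrC. Qed.
Lemma cReS (R : rcfType) I (r : seq I) (P : pred I) (F : I -> R[i]) :
  complex.Re (\sum_(j <- r | P j) F j) = \sum_(j <- r | P j) complex.Re (F j).
Proof. by apply: (big_morph _ (@cReD R)). Qed.
Lemma cImS (R : rcfType) I (r : seq I) (P : pred I) (F : I -> R[i]) :
  complex.Im (\sum_(j <- r | P j) F j) = \sum_(j <- r | P j) complex.Im (F j).
Proof. by apply: (big_morph _ (@cImD R)). Qed.

Lemma cdec (R : rcfType) m k (M : 'M[R[i]]_(m,k)) :
  M = mapC (reM M) + 'i%C *: mapC (imM M).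
Proof.
apply/matrixP=> a b; rewrite !mxE /toC; case: (M a b) => x y.
by apply/eqP; rewrite eq_complex /= !mul0r !mul1r !subr0 !addr0 !add0r !eqxx.
Qed.

Lemma reM_inj (R : rcfType) m k (M N : 'M[R[i]]_(m,k)) :
  reM M = reM N -> imM M = imM N -> M = N.
Proof. by move=> h1 h2; rewrite (cdec M) (cdec N) h1 h2. Qed.

Lemma reMD (R : rcfType) m k (M N : 'M[R[i]]_(m,k)) : reM (M + N) = reM M + reM N.
Proof. by apply/matrixP=> a b; rewrite !mxE cReD. Qed.
Lemma imMD (R : rcfType) m k (M N : 'M[R[i]]_(m,k)) : imM (M + N) = imM M + imM N.
Proof. by apply/matrixP=> a b; rewrite !mxE cImD. Qed.
Lemma reMN (R : rcfType) m k (M : 'M[R[i]]_(m,k)) : reM (- M) = - reM M.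
Proof. by apply/matrixP=> a b; rewrite !mxE; case: (M a b). Qed.
Lemma imMN (R : rcfType) m k (M : 'M[R[i]]_(m,k)) : imM (- M) = - imM M.
Proof. by apply/matrixP=> a b; rewrite !mxE; case: (M a b). Qed.
Lemma reM0 (R : rcfType) m k : reM (0 : 'M[R[i]]_(m,k)) = 0.
Proof. by apply/matrixP=> a b; rewrite !mxE. Qed.
Lemma imM0 (R : rcfType) m k : imM (0 : 'M[R[i]]_(m,k)) = 0.
Proof. by apply/matrixP=> a b; rewrite !mxE. Qed.
Lemma reMS (R : rcfType) m k I (r : seq I) (P : pred I) (F : I -> 'M[R[i]]_(m,k)) :
  reM (\sum_(j <- r | P j) F j) = \sum_(j <- r | P j) reM (F j).
Proof. by apply: (big_morph _ (@reMD R m k) (@reM0 R m k)). Qed.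
Lemma imMS (R : rcfType) m k I (r : seq I) (P : pred I) (F : I -> 'M[R[i]]_(m,k)) :
  imM (\sum_(j <- r | P j) F j) = \sum_(j <- r | P j) imM (F j).
Proof. by apply: (big_morph _ (@imMD R m k) (@imM0 R m k)). Qed.
Lemma reMi (R : rcfType) m k (M : 'M[R[i]]_(m,k)) : reM ('i%C *: M) = - imM M.
Proof. by apply/matrixP=> a b; rewrite !mxE; case: (M a b) => x y /=; rewrite !mul0r mul1r sub0r. Qed.
Lemma imMi (R : rcfType) m k (M : 'M[R[i]]_(m,k)) : imM ('i%C *: M) = reM M.
Proof. by apply/matrixP=> a b; rewrite !mxE; case: (M a b) => x y /=; rewrite !mul0r mul1r add0r. Qed.
Lemma reMr (R : rcfType) m k (c : R) (M : 'M[R[i]]_(m,k)) : reM (toC c *: M) = c *: reM M.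
Proof. by apply/matrixP=> a b; rewrite !mxE; case: (M a b) => x y /=; rewrite !mul0r subr0. Qed.
Lemma imMr (R : rcfType) m k (c : R) (M : 'M[R[i]]_(m,k)) : imM (toC c *: M) = c *: imM M.
Proof. by apply/matrixP=> a b; rewrite !mxE; case: (M a b) => x y /=; rewrite !mul0r addr0. Qed.
Lemma reMC (R : rcfType) m k (A : 'M[R]_(m,k)) : reM (mapC A) = A.
Proof. by apply/matrixP=> a b; rewrite !mxE. Qed.
Lemma imMC (R : rcfType) m k (A : 'M[R]_(m,k)) : imM (mapC A) = 0.
Proof. by apply/matrixP=> a b; rewrite !mxE. Qed.
Lemma reMJ (R : rcfType) m k (M : 'M[R[i]]_(m,k)) : reM (conjv M) = reM M.
Proof. by apply/matrixP=> a b; rewrite !mxE; case: (M a b). Qed.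
Lemma imMJ (R : rcfType) m k (M : 'M[R[i]]_(m,k)) : imM (conjv M) = - imM M.
Proof. by apply/matrixP=> a b; rewrite !mxE; case: (M a b). Qed.

Lemma reMM (R : rcfType) m k l (M : 'M[R[i]]_(m,k)) (N : 'M[R[i]]_(k,l)) :
  reM (M *m N) = reM M *m reM N - imM M *m imM N.
Proof.
apply/matrixP=> a b; rewrite !mxE cReS -sumrB; apply: eq_bigr => j _.
by rewrite !mxE cReM.
Qed.
Lemma imMM (R : rcfType) m k l (M : 'M[R[i]]_(m,k)) (N : 'M[R[i]]_(k,l)) :
  imM (M *m N) = reM M *m imM N + imM M *m reM N.
Proof.
apply/matrixP=> a b; rewrite !mxE cImS -big_split; apply: eq_bigr => j _.
by rewrite !mxE cImM.
Qed.
Lemma Re_tr (R : rcfType) k (M : 'M[R[i]]_k) : complex.Re (\tr M) = \tr (reM M).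
Proof. by rewrite /mxtrace cReS; apply: eq_bigr => j _; rewrite mxE. Qed.
Lemma Im_tr (R : rcfType) k (M : 'M[R[i]]_k) : complex.Im (\tr M) = \tr (imM M).
Proof. by rewrite /mxtrace cImS; apply: eq_bigr => j _; rewrite mxE. Qed.


Lemma brRDl (R : rcfType) n (cst : 'I_n -> 'I_n -> 'rV[R]_n) x y z :
  brR cst (x + y) z = brR cst x z + brR cst y z.
Proof.
rewrite /brR -big_split; apply: eq_bigr => i _; rewrite -big_split.
by apply: eq_bigr => j _; rewrite mxE mulrDl scalerDl.
Qed.
Lemma brRDr (R : rcfType) n (cst : 'I_n -> 'I_n -> 'rV[R]_n) x y z :
  brR cst z (x + y) = brR cst z x + brR cst z y.
Proof.
rewrite /brR -big_split; apply: eq_bigr => i _; rewrite -big_split.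
by apply: eq_bigr => j _; rewrite mxE mulrDr scalerDl.
Qed.
Lemma brRZl (R : rcfType) n (cst : 'I_n -> 'I_n -> 'rV[R]_n) a x z :
  brR cst (a *: x) z = a *: brR cst x z.
Proof.
rewrite /brR scaler_sumr; apply: eq_bigr => i _; rewrite scaler_sumr.
by apply: eq_bigr => j _; rewrite mxE scalerA mulrA.
Qed.
Lemma brRZr (R : rcfType) n (cst : 'I_n -> 'I_n -> 'rV[R]_n) a x z :
  brR cst z (a *: x) = a *: brR cst z x.
Proof.
rewrite /brR scaler_sumr; apply: eq_bigr => i _; rewrite scaler_sumr.
by apply: eq_bigr => j _; rewrite mxE scalerA mulrCA.
Qed.
Lemma brRNl (R : rcfType) n (cst : 'I_n -> 'I_n -> 'rV[R]_n) x z :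
  brR cst (- x) z = - brR cst x z.
Proof. by rewrite -scaleN1r brRZl scaleN1r. Qed.
Lemma brRNr (R : rcfType) n (cst : 'I_n -> 'I_n -> 'rV[R]_n) x z :
  brR cst z (- x) = - brR cst z x.
Proof. by rewrite -scaleN1r brRZr scaleN1r. Qed.
Lemma brR0l (R : rcfType) n (cst : 'I_n -> 'I_n -> 'rV[R]_n) z :
  brR cst 0 z = 0.
Proof. by rewrite /brR big1 // => i _; rewrite big1 // => j _; rewrite mxE mul0r scale0r. Qed.
Lemma brR0r (R : rcfType) n (cst : 'I_n -> 'I_n -> 'rV[R]_n) z :
  brR cst z 0 = 0.
Proof. by rewrite /brR big1 // => i _; rewrite big1 // => j _; rewrite mxE mulr0 scale0r. Qed.

Lemma reM_brC (R : rcfType) n (cst : 'I_n -> 'I_n -> 'rV[R]_n) x y :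
  reM (brC cst x y) = brR cst (reM x) (reM y) - brR cst (imM x) (imM y).
Proof.
apply/matrixP=> a b; rewrite !mxE !summxE cReS -sumrB; apply: eq_bigr => i _.
rewrite !summxE cReS -sumrB; apply: eq_bigr => j _.
rewrite !mxE /toC !cReM cImM /= !mulr0 !subr0; ring.
Qed.
Lemma imM_brC (R : rcfType) n (cst : 'I_n -> 'I_n -> 'rV[R]_n) x y :
  imM (brC cst x y) = brR cst (reM x) (imM y) + brR cst (imM x) (reM y).
Proof.
apply/matrixP=> a b; rewrite !mxE !summxE cImS -big_split; apply: eq_bigr => i _.
rewrite !summxE cImS -big_split; apply: eq_bigr => j _.
rewrite !mxE /toC !cImM cReM /= !mulr0 ?addr0 ?subr0; ring.
Qed.


Lemma mul_adR (R : rcfType) n (cst : 'I_n -> 'I_n -> 'rV[R]_n) x v :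
  v *m adR cst x = brR cst x v.
Proof.
have brRS I r (P : pred I) F : brR cst x (\sum_(k <- r | P k) F k) = \sum_(k <- r | P k) brR cst x (F k).
  by apply: (big_morph _ (fun u v => @brRDr R n cst u v x) (brR0r cst x)).
rewrite [in RHS](row_sum_delta v) brRS; apply/matrixP => a j; rewrite (ord1 a).
rewrite !mxE summxE; apply: eq_bigr => k _; by rewrite !mxE brRZr mxE.
Qed.

Lemma adR_hom (R : rcfType) n (cst : 'I_n -> 'I_n -> 'rV[R]_n) x y :
  is_lie_algebra cst ->
  adR cst (brR cst x y) = adR cst y *m adR cst x - adR cst x *m adR cst y.
Proof.
move=> [anti jac]; apply/row_matrixP => k; rewrite !rowE mulmxBr !mulmxA !mul_adR.
set e := delta_mx 0 k.
have := jac x y e; rewrite (anti e x) (anti e (brR cst x y)) brRNr => h.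
by apply/eqP; rewrite eq_sym -subr_eq0 h.
Qed.

Lemma adRD (R : rcfType) n (cst : 'I_n -> 'I_n -> 'rV[R]_n) x y :
  adR cst (x + y) = adR cst x + adR cst y.
Proof. by apply/matrixP => a b; rewrite !mxE brRDl mxE. Qed.
Lemma adRZ (R : rcfType) n (cst : 'I_n -> 'I_n -> 'rV[R]_n) c x :
  adR cst (c *: x) = c *: adR cst x.
Proof. by apply/matrixP => a b; rewrite !mxE brRZl mxE. Qed.

Lemma kilRC (R : rcfType) n (cst : 'I_n -> 'I_n -> 'rV[R]_n) x y :
  kilR cst x y = kilR cst y x.
Proof. by rewrite /kilR mxtrace_mulC. Qed.
Lemma kilRDl (R : rcfType) n (cst : 'I_n -> 'I_n -> 'rV[R]_n) x y z :
  kilR cst (x + y) z = kilR cst x z + kilR cst y z.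
Proof. by rewrite /kilR adRD mulmxDl mxtraceD. Qed.
Lemma kilRZl (R : rcfType) n (cst : 'I_n -> 'I_n -> 'rV[R]_n) c x z :
  kilR cst (c *: x) z = c * kilR cst x z.
Proof. by rewrite /kilR adRZ -scalemxAl mxtraceZ. Qed.
Lemma kilRNl (R : rcfType) n (cst : 'I_n -> 'I_n -> 'rV[R]_n) x z :
  kilR cst (- x) z = - kilR cst x z.
Proof. by rewrite -scaleN1r kilRZl mulN1r. Qed.
Lemma kilR0l (R : rcfType) n (cst : 'I_n -> 'I_n -> 'rV[R]_n) z :
  kilR cst 0 z = 0.
Proof. by rewrite -(subrr z) kilRDl kilRNl subrr. Qed.
Lemma kilRDr (R : rcfType) n (cst : 'I_n -> 'I_n -> 'rV[R]_n) x y z :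
  kilR cst z (x + y) = kilR cst z x + kilR cst z y.
Proof. by rewrite !(kilRC cst z) kilRDl. Qed.
Lemma kilRZr (R : rcfType) n (cst : 'I_n -> 'I_n -> 'rV[R]_n) c x z :
  kilR cst z (c *: x) = c * kilR cst z x.
Proof. by rewrite !(kilRC cst z) kilRZl. Qed.
Lemma kilRNr (R : rcfType) n (cst : 'I_n -> 'I_n -> 'rV[R]_n) x z :
  kilR cst z (- x) = - kilR cst z x.
Proof. by rewrite !(kilRC cst z) kilRNl. Qed.
Lemma kilRSl (R : rcfType) n (cst : 'I_n -> 'I_n -> 'rV[R]_n) I r (P : pred I) F z :
  kilR cst (\sum_(k <- r | P k) F k) z = \sum_(k <- r | P k) kilR cst (F k) z.
Proof. by apply: (big_morph _ (fun u v => @kilRDl R n cst u v z) (kilR0l cst z)). Qed.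

Lemma kilR_inv (R : rcfType) n (cst : 'I_n -> 'I_n -> 'rV[R]_n) x y z :
  is_lie_algebra cst ->
  kilR cst (brR cst x y) z = - kilR cst y (brR cst x z).
Proof.
move=> hL.
have e : \tr (adR cst y *m adR cst z *m adR cst x) = \tr (adR cst x *m adR cst y *m adR cst z).
  by rewrite mxtrace_mulC mulmxA.
rewrite /kilR !adR_hom // mulmxBl mulmxBr !mulmxA !linearB /= e.
by rewrite opprB.
Qed.

Lemma reM_delta (R : rcfType) m k (a : 'I_m) (b : 'I_k) :
  reM (delta_mx a b : 'M[R[i]]_(m,k)) = delta_mx a b.
Proof. by apply/matrixP => u v; rewrite !mxE; case: (_ && _). Qed.
Lemma imM_delta (R : rcfType) m k (a : 'I_m) (b : 'I_k) :
  imM (delta_mx a b : 'M[R[i]]_(m,k)) = 0.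
Proof. by apply/matrixP => u v; rewrite !mxE; case: (_ && _). Qed.

Lemma reM_adC (R : rcfType) n (cst : 'I_n -> 'I_n -> 'rV[R]_n) x :
  reM (adC cst x) = adR cst (reM x).
Proof.
apply/matrixP => k j.
transitivity (reM (brC cst x (delta_mx 0 k)) 0 j); first by rewrite !mxE.
by rewrite reM_brC reM_delta imM_delta brR0r subr0 mxE.
Qed.
Lemma imM_adC (R : rcfType) n (cst : 'I_n -> 'I_n -> 'rV[R]_n) x :
  imM (adC cst x) = adR cst (imM x).
Proof.
apply/matrixP => k j.
transitivity (imM (brC cst x (delta_mx 0 k)) 0 j); first by rewrite !mxE.
by rewrite imM_brC reM_delta imM_delta brR0r add0r mxE.
Qed.

Lemma Re_kilC (R : rcfType) n (cst : 'I_n -> 'I_n -> 'rV[R]_n) x y :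
  complex.Re (kilC cst x y) = kilR cst (reM x) (reM y) - kilR cst (imM x) (imM y).
Proof. by rewrite /kilC Re_tr reMM !reM_adC !imM_adC raddfB. Qed.
Lemma Im_kilC (R : rcfType) n (cst : 'I_n -> 'I_n -> 'rV[R]_n) x y :
  complex.Im (kilC cst x y) = kilR cst (reM x) (imM y) + kilR cst (imM x) (reM y).
Proof. by rewrite /kilC Im_tr imMM !reM_adC !imM_adC mxtraceD. Qed.


Lemma reM_sub (R : rcfType) n (P : 'M[R]_n) (e : 'rV[R[i]]_n) :
  (e <= mapC P)%MS -> (reM e <= P)%MS /\ (imM e <= P)%MS.
Proof.
move=> /submxP [w ->]; rewrite reMM imMM reMC imMC !mulmx0 subr0 ?addr0 ?add0r.
by split; apply: submxMl.
Qed.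

Lemma frame_facts (R : rcfType) n (cst : 'I_n -> 'I_n -> 'rV[R]_n) L P H0
    (e : 'rV[R[i]]_n) :
  is_lie_algebra cst -> is_cartan_decomposition cst L P -> is_H0 cst L P H0 ->
  in_pplus cst P H0 e -> hermK cst e e = 1 ->
  [/\ (reM ('i%C *: brC cst e (conjv e)) <= L)%MS,
      (imM ('i%C *: brC cst e (conjv e)) <= L)%MS &
      kilR cst (reM ('i%C *: brC cst e (conjv e))) H0 = -1].
Proof.
move=> hL [_ [_ [_ [_ [hPP [_ _]]]]]] [hH0L _] [eP eig] herm.
have [aP bP] := reM_sub eP.
set a := reM e; set b := imM e.
have bP' : (- b <= P)%MS by rewrite -scaleN1r scalemx_sub.
have e1 : brR cst H0 a = - b.
  have := congr1 (@reM _ _ _) eig; rewrite reM_brC reMi reMC imMC brR0l subr0 //.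
have e2 : brR cst H0 b = a.
  have := congr1 (@imM _ _ _) eig; rewrite imM_brC imMi reMC imMC brR0l addr0 //.
have hK : kilR cst a a + kilR cst b b = 1.
  have := congr1 (@complex.Re _) herm; rewrite /hermK Re_kilC reMJ imMJ kilRNr opprK //.
have [anti _] := hL.
have Nsub (M : 'M[R]_n) (x : 'rV[R]_n) : (x <= M)%MS -> (- x <= M)%MS.
  by move=> h; rewrite -scaleN1r scalemx_sub.
rewrite reMi imMi reM_brC imM_brC reMJ imMJ -/a -/b; split.
- by apply: Nsub; rewrite addmx_sub //; apply: hPP.
- by rewrite addmx_sub //; try apply: Nsub; apply: hPP.
rewrite kilRNl kilRDl brRNr kilRNl !kilR_inv //.
rewrite (anti a H0) (anti b H0) e1 e2 !opprK kilRNr.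
by rewrite -hK; lra.
Qed.


Lemma sigma_facts (R : rcfType) n (cst : 'I_n -> 'I_n -> 'rV[R]_n) L P H0 p
    (E : 'M[R[i]]_(p, n)) :
  is_lie_algebra cst -> is_cartan_decomposition cst L P -> is_H0 cst L P H0 ->
  unitary_frame cst P H0 E ->
  [/\ (reM (Sigma cst E) <= L)%MS, (imM (Sigma cst E) <= L)%MS &
      kilR cst (reM (Sigma cst E)) H0 = - p%:R].
Proof.
move=> hL hC hH [hp hu].
have F k : _ := frame_facts hL hC hH (hp k) (etrans (hu k k) (congr1 (fun b : bool => b%:R) (eqxx k))).
rewrite /Sigma scaler_sumr reMS imMS kilRSl; split.
- by apply: (big_ind (fun x => x <= L)%MS) => [|x y hx hy|k _]; [exact: sub0mx|exact: addmx_sub|case: (F k)].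
- by apply: (big_ind (fun x => x <= L)%MS) => [|x y hx hy|k _]; [exact: sub0mx|exact: addmx_sub|case: (F k)].
rewrite (eq_bigr (fun _ => -1)); last by move=> k _; case: (F k).
by rewrite sumr_const card_ord -mulNrn.
Qed.

Lemma cReN (R : rcfType) (x : R[i]) : complex.Re (- x) = - complex.Re x.
Proof. by case: x. Qed.
Lemma cImN (R : rcfType) (x : R[i]) : complex.Im (- x) = - complex.Im x.
Proof. by case: x. Qed.

Lemma Re_normsq (R : rcfType) n (cst : 'I_n -> 'I_n -> 'rV[R]_n) x :
  complex.Re (normsq_gl cst x) = - (kilR cst (reM x) (reM x) + kilR cst (imM x) (imM x)).
Proof. by rewrite /normsq_gl cReN Re_kilC reMJ imMJ kilRNr opprK. Qed.
Lemma Im_normsq (R : rcfType) n (cst : 'I_n -> 'I_n -> 'rV[R]_n) x :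
  complex.Im (normsq_gl cst x) = 0.
Proof. by rewrite /normsq_gl cImN Im_kilC reMJ imMJ kilRNr kilRC addrC subrr oppr0. Qed.

Lemma cle_parts (R : rcfType) (x y : R[i]) :
  complex.Im x = 0 -> complex.Im y = 0 -> complex.Re x <= complex.Re y -> x <= y.
Proof. by move=> hx hy h; rewrite lecE hx hy eqxx h. Qed.

Unset Implicit Arguments.

Theorem lemma6 (R : rcfType) (n : nat) (cst : 'I_n -> 'I_n -> 'rV[R]_n)
    (L P : 'M[R]_n) (H0 : 'rV[R]_n) (p : nat) (A : 'M[R[i]]_(p, n)) (c : R) :
  is_lie_algebra cst ->
  is_simple cst ->
  is_cartan_decomposition cst L P ->
  (0 < \rank P)%N ->
  is_H0 cst L P H0 ->
  unitary_frame cst P H0 A ->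
  Sigma cst A = (toC c) *: mapC H0 ->
  forall B : 'M[R[i]]_(p, n), unitary_frame cst P H0 B ->
    normsq_gl cst (Sigma cst A) <= normsq_gl cst (Sigma cst B).
Proof.
move=> hL _ hC _ hH hA hS B hB.
have [_ _ kA] := sigma_facts hL hC hH hA.
have [rL iL kB] := sigma_facts hL hC hH hB.
have rA : reM (Sigma cst A) = c *: H0 by rewrite hS reMr reMC.
have iA : imM (Sigma cst A) = 0 by rewrite hS imMr imMC scaler0.
apply: cle_parts; [exact: Im_normsq|exact: Im_normsq|].
move: (Sigma cst A) (Sigma cst B) rA iA kA rL iL kB => SA SB rA iA kA rL iL kB.
clear hS hA hB.
have [H0L _] := hH.
have [_ [_ [_ [_ [_ [neg _]]]]]] := hC.
have nonpos x : (x <= L)%MS -> kilR cst x x <= 0.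
  move=> hx; have [->|nz] := eqVneq x 0; first by rewrite kilR0l.
  by apply: ltW; apply: neg.
rewrite !Re_normsq rA iA.
move: (reM SB) (imM SB) rL iL kB => rB iB rL iL kB.
rewrite rA in kA.
have hd : (rB - c *: H0 <= L)%MS.
  by rewrite addmx_sub // -scaleNr scalemx_sub.
have h1 := nonpos _ hd; have h2 := nonpos _ iL.
move: h1; rewrite !kilRDl !kilRDr !kilRNl !kilRNr !kilRZl !kilRZr (kilRC cst H0 rB) kB => h1.
move: kA; rewrite kilRZl => kA.
rewrite kilR0l ?kilRZl ?kilRZr.
move: h1; rewrite -kA => h1.
nra.
Qed.
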